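(* Let $G=(V,E)$ be a simple graph and $v\in V$ with degree $d(v)$. Then $$P(\mathcal{H}_{\bullet G},\lambda)=(\lambda-1)P(\mathcal{H}_{\bullet(G-\{v\})},\lambda)+(\lambda-1)^{d(v)}P(\mathcal{H}_{\bullet(G-N[v])},\lambda),$$ where $N[v]$ is the closed neighbourhood of $v$ and $G-S$ denotes the graph obtained by deleting the vertex set $S$.
   Context: A hypergraph $\mathcal{H}=(\mathcal{V},\mathcal{E})$ consists of a finite vertex set $\mathcal{V}$ and a set $\mathcal{E}$ of subsets of $\mathcal{V}$, each of size at least $1$, called edges. For a positive integer $\lambda$, a weak proper $\lambda$-colouring of $\mathcal{H}$ is a map $\phi:\mathcal{V}\to\{1,\dots,\lambda\}$ such that $|\{\phi(v):v\in e\}|>1$ for every $e\in\mathcal{E}$. $P(\mathcal{H},\lambda)$ denotes the number of weak proper $\lambda$-colourings; it is a polynomial in $\lambda$. For a simple graph $G=(V,E)$ (possibly with empty vertex set), $\mathcal{H}_{\bullet G}$ is the hypergraph with vertex set $V\cup\{w\}$, $w\notin V$ a new vertex, and edge set $\{\{u,v,w\}:uv\in E\}$. *)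

(* Defs.v *)
From HB Require Import structures.
From mathcomp Require Import all_boot.
Set Implicit Arguments. Unset Strict Implicit. Unset Printing Implicit Defensive.

(* A hypergraph on an ambient finite type T: vertex set Vs : {set T},
   edge set Es : {set {set T}} (each edge a nonempty subset of Vs). *)

(* A colouring of the vertex set Vs with colours {1..lam} (here 'I_lam)
   is a function on the subtype of vertices. *)
Definition weak_proper (T : finType) (Vs : {set T}) (Es : {set {set T}})
  (lam : nat) (phi : {ffun {x : T | x \in Vs} -> 'I_lam}) : bool :=
  [forall e in Es,
     [exists x : {x : T | x \in Vs}, exists y : {x : T | x \in Vs},
        [&& val x \in e, val y \in e & phi x != phi y]]].

Definition chrom_hyp (T : finType) (Vs : {set T}) (Es : {set {set T}})
  (lam : nat) : nat :=
  #|[set phi : {ffun {x : T | x \in Vs} -> 'I_lam} | weak_proper Es phi]|.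

(* A simple graph G = (V, E) is given by a vertex set V : {set T} and a
   symmetric irreflexive relation adj; its edges are the pairs uv with
   u, v in V and adj u v. *)

(* H_{bullet G}: vertices V + {w}, with w = None; edges {u,v,w} for uv in E. *)
Definition Hb_vertices (T : finType) (V : {set T}) : {set option T} :=
  None |: (Some @: V).

Definition Hb_edges (T : finType) (V : {set T}) (adj : rel T)
  : {set {set option T}} :=
  [set [set Some x.1; Some x.2; None] | x in setX V V & adj x.1 x.2].

Definition P_Hb (T : finType) (V : {set T}) (adj : rel T) (lam : nat) : nat :=
  chrom_hyp (Hb_vertices V) (Hb_edges V adj) lam.

Definition nbhd (T : finType) (V : {set T}) (adj : rel T) (v : T) : {set T} :=
  [set u in V | adj v u].
Definition degree (T : finType) (V : {set T}) (adj : rel T) (v : T) : nat :=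
  #|nbhd V adj v|.
Definition closed_nbhd (T : finType) (V : {set T}) (adj : rel T) (v : T)
  : {set T} := v |: nbhd V adj v.

(* Main.v *)
Require Import Defs.
From HB Require Import structures.
From mathcomp Require Import all_boot.
Set Implicit Arguments. Unset Strict Implicit. Unset Printing Implicit Defensive.


Lemma card_fibers (X Y : finType) (A : {set X}) (B : {set Y}) (r : X -> Y) (k : nat) :
  (forall f, f \in A -> r f \in B) ->
  (forall g, g \in B -> #|[set f in A | r f == g]| = k) -> #|A| = #|B| * k.
Proof.
move=> hr hk.
rewrite -sum1_card (partition_big r (mem B)) //=.
rewrite -sum_nat_const; apply: eq_bigr => g hg.
rewrite -(hk g hg) -sum1_card; apply: eq_bigl => f; by rewrite inE.
Qed.

Lemma prod_card (T : finType) (N : {set T}) (n : nat) :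
  foldr muln 1 [seq n | x in N] = n ^ #|N|.
Proof.
rewrite foldrE big_map big_filter.
by rewrite prod_nat_const.
Qed.

Section S.
Variables (T : finType) (adj : rel T) (n : nat).
Notation fT := {ffun option T -> 'I_n.+1}.

Definition good (V : {set T}) (f : fT) : bool :=
  [forall a in V, forall b in V, adj a b ==> ~~ ((f (Some a) == f None) && (f (Some b) == f None))].
Definition supp (V : {set T}) (f : fT) : bool :=
  [forall a, (a \notin V) ==> (f (Some a) == ord0)].
Definition Kset V := [set f | supp V f && good V f].

Lemma edge_ok (f : fT) a b :
  [exists x, exists y, [&& x \in [set Some a; Some b; None], y \in [set Some a; Some b; None] & f x != f y]]
  = ~~ ((f (Some a) == f None) && (f (Some b) == f None)).
Proof.
apply/existsP/idP.
  case=> x /existsP [y /and3P [hx hy hne]].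
  apply/andP => -[/eqP e1 /eqP e2]; move: hne.
  rewrite !inE -!orbA in hx hy.
  by case/or3P: hx => /eqP->; case/or3P: hy => /eqP->; rewrite ?e1 ?e2 eqxx.
rewrite negb_and => /orP[h|h]; [exists (Some a)|exists (Some b)];
  apply/existsP; exists None; by rewrite !inE eqxx /= ?orbT h.
Qed.

Lemma good_edges V (f : fT) :
  [forall e in Hb_edges V adj, [exists x, exists y, [&& x \in e, y \in e & f x != f y]]]
  = good V f.
Proof.
apply/forall_inP/forall_inP.
  move=> H a ha; apply/forall_inP => b hb; apply/implyP => hab.
  rewrite -edge_ok; apply: H.
  apply/imsetP; exists (a, b) => //; by rewrite !inE ha hb hab.
move=> H e /imsetP [[a b]]; rewrite !inE /= => /andP [/andP [ha hb] hab] ->.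
rewrite edge_ok.
by move: (H a ha) => /forall_inP /(_ b hb) /implyP /(_ hab).
Qed.

Definition Vs (V : {set T}) := Hb_vertices V.
Definition ext V (phi : {ffun {x : option T | x \in Vs V} -> 'I_n.+1}) : fT :=
  [ffun x => match (insub x : option {x : option T | x \in Vs V}) with Some y => phi y | None => ord0 end].

Lemma ext_inj V : injective (@ext V).
Proof.
move=> p1 p2 H; apply/ffunP => y.
have := congr1 (fun f : fT => f (val y)) H; by rewrite !ffunE valK.
Qed.

Lemma wp_ext V (phi : {ffun {x : option T | x \in Vs V} -> 'I_n.+1}) : weak_proper (Hb_edges V adj) phi = good V (ext phi).
Proof.
rewrite -good_edges /weak_proper.
apply: eq_forallb => e; case he: (e \in Hb_edges V adj) => //=.
have sub : forall x, x \in e -> x \in Vs V.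
  move: he => /imsetP [[a b]]; rewrite !inE /= => /andP [/andP [ha hb] _] -> x.
  rewrite /Vs /Hb_vertices !inE -!orbA. idtac.
  by case/or3P => /eqP->; rewrite ?eqxx // ?imset_f ?orbT.
apply/existsP/existsP.
  case=> x /existsP [y /and3P [hx hy hne]]; exists (val x); apply/existsP; exists (val y).
  by rewrite hx hy /= !ffunE !valK.
case=> x /existsP [y /and3P [hx hy hne]].
exists (Sub x (sub x hx)); apply/existsP; exists (Sub y (sub y hy)).
move: hne; rewrite !SubK hx hy /= !ffunE.
have E z (hz : z \in Vs V) : (insub z : option {x : option T | x \in Vs V}) = Some (Sub z hz).
  by case: insubP => [u _ hu|]; [congr Some; apply: val_inj; rewrite SubK | rewrite hz].
by rewrite (E x (sub x hx)) (E y (sub y hy)).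
Qed.

Lemma P_K V : P_Hb V adj n.+1 = #|Kset V|.
Proof.
rewrite /P_Hb /chrom_hyp -(card_imset _ (@ext_inj V)).
apply: eq_card => f; apply/imsetP/idP.
  case=> phi; rewrite inE => hw ->.
  rewrite inE -wp_ext hw andbT; apply/forallP => a; apply/implyP => ha.
  rewrite ffunE insubN //= /Vs /Hb_vertices !inE /=.
  apply/negP => /imsetP [b hb [e]]; by subst; rewrite hb in ha.
rewrite inE => /andP [hs hg].
have E : ext (V:=V) [ffun y => f (val y)] = f.
  apply/ffunP => x; rewrite ffunE; case: insubP => [y _ <-|]; first by rewrite ffunE.
  case: x => [a|]; last by rewrite /Vs /Hb_vertices !inE eqxx.
  rewrite /Vs /Hb_vertices !inE /= => ha.
  have ha' : a \notin V by apply: contra ha => h; apply: imset_f.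
  by move: hs => /forallP /(_ a) /implyP /(_ ha') /eqP ->.
exists [ffun y => f (val y)] => //; by rewrite inE wp_ext E.
Qed.

Lemma goodP (V : {set T}) (f : fT) : reflect (forall a b, a \in V -> b \in V -> adj a b ->
   ~~ ((f (Some a) == f None) && (f (Some b) == f None))) (good V f).
Proof.
apply: (iffP forall_inP) => H a.
  move=> b ha hb hab; move: (H a ha) => /forall_inP/(_ b hb)/implyP; exact.
move=> ha; apply/forall_inP => b hb; apply/implyP; exact: H.
Qed.

Lemma suppP (V : {set T}) (f : fT) : reflect (forall a, a \notin V -> f (Some a) = ord0) (supp V f).
Proof.
apply: (iffP forallP) => H a; first by move=> ha; apply/eqP; exact: (implyP (H a)).
by apply/implyP => ha; apply/eqP; apply: H.
Qed.

Lemma someE (a b : T) : (Some a == Some b) = (a == b).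
Proof. by []. Qed.

Definition upd (f : fT) x0 c : fT := [ffun x => if x == x0 then c else f x].

Lemma partA (V : {set T}) v : v \in V ->
  #|[set f in Kset V | f (Some v) != f None]| = #|Kset (V :\ v)| * n.
Proof.
move=> hv.
apply: (card_fibers (r := fun f => upd f (Some v) ord0)).
  move=> f; rewrite !inE => /andP[/andP[/suppP hs /goodP hg] _]; apply/andP; split.
    apply/suppP => a; rewrite !inE negb_and negbK ffunE => /orP[/eqP->|ha]; first by rewrite eqxx.
    by case: (Some a =P Some v) => // _; apply: hs.
  apply/goodP => a b; rewrite !inE => /andP[hav ha] /andP[hbv hb] hab.
  rewrite !ffunE !someE (negbTE hav) (negbTE hbv); exact: hg.
move=> g; rewrite inE => /andP[/suppP hs /goodP hg].
have gv : g (Some v) = ord0 by apply: hs; rewrite !inE eqxx.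
transitivity #|[set~ g None]|; last by rewrite cardsC1 card_ord.
rewrite -(card_imset _ (f := upd g (Some v))); last first.
  by move=> c1 c2 /(congr1 (fun f : fT => f (Some v))); rewrite !ffunE eqxx.
apply: eq_card => f; apply/idP/imsetP.
  rewrite !inE => /andP[/andP[/andP[/suppP fs /goodP fg] fne] /eqP rf].
  have fN : f None = g None by rewrite -rf ffunE.
  exists (f (Some v)); first by rewrite !inE -fN.
  apply/ffunP => x; rewrite ffunE; case: eqP => [->//|hx].
  by rewrite -rf ffunE; case: eqP.
case=> c; rewrite !inE => hc ->.
have E x : x != Some v -> upd g (Some v) c x = g x by move=> hx; rewrite ffunE (negbTE hx).
rewrite !ffunE eqxx /= hc andbT.
apply/andP; split; first (apply/andP; split).
- apply/suppP => a ha; rewrite E; last by apply: contraNneq ha => -[->].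
  by apply: hs; rewrite !inE negb_and ha orbT.
- apply/goodP => a b ha hb hab.
  have EN : upd g (Some v) c None = g None by rewrite E.
  case: (a =P v) => [->|hav]; first by rewrite ffunE eqxx EN (negbTE hc).
  case: (b =P v) => [->|hbv]; first by rewrite [upd _ _ _ (Some v)]ffunE eqxx EN (negbTE hc) andbF.
  rewrite EN !E; try by apply/eqP => -[].
  by apply: hg; rewrite // !inE; apply/andP; split=> //; apply/eqP.
- apply/eqP/ffunP => x; rewrite !ffunE; case: eqP => [->|hx]; first by rewrite gv.
  by [].
Qed.

Lemma card_H (N : {set T}) (a : 'I_n.+1) :
  #|[set h : {ffun T -> 'I_n.+1} | [forall u, if u \in N then h u != a else h u == ord0]]|
  = n ^ #|N|.
Proof.
rewrite -(prod_card N n).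
have -> : [seq n | x in N] = [seq #|[set~ a]| | x in N].
  by rewrite cardsC1 card_ord.
rewrite -(card_pfamily ord0 N (fun _ => mem [set~ a])).
apply: eq_card => h; rewrite inE; apply/forallP/familyP => H x; move: (H x);
  case: (x \in N); by rewrite ?inE.
Qed.

Lemma partB (V : {set T}) v : symmetric adj -> irreflexive adj -> v \in V ->
  #|[set f in Kset V | f (Some v) == f None]|
  = #|Kset (V :\: closed_nbhd V adj v)| * n ^ degree V adj v.
Proof.
move=> asym airr hv.
set N := nbhd V adj v; set Nc := closed_nbhd V adj v.
have inN u : (u \in N) = (u \in V) && adj v u by rewrite inE.
have inNc u : (u \in Nc) = (u == v) || (u \in N) by rewrite !inE.
have vN : v \notin N by rewrite inN airr andbF.
apply: (card_fibers (r := fun f : fT => [ffun x => if x is Some u then (if u \in Nc then ord0 else f x) else f x])).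
  move=> f; rewrite !inE => /andP[/andP[/suppP hs /goodP hg] _]; apply/andP; split.
    apply/suppP => a; rewrite in_setD negb_and negbK ffunE => /orP[ha|ha].
      by rewrite ha.
    by case: (a \in Nc) => //; apply: hs.
  apply/goodP => a b; rewrite !in_setD => /andP[haN ha] /andP[hbN hb] hab.
  rewrite !ffunE (negbTE haN) (negbTE hbN); exact: hg.
move=> g; rewrite inE => /andP[/suppP hs /goodP hg].
rewrite /degree -/N -(card_H N (g None)).
set H := [set h : {ffun T -> 'I_n.+1} | _].
set ext := fun h : {ffun T -> 'I_n.+1} => [ffun x : option T => if x is Some u then (if u == v then g None else if u \in N then h u else g x) else g None] : fT.
rewrite -(card_in_imset (f := ext)); last first.
  move=> h1 h2; rewrite !inE => /forallP H1 /forallP H2 E; apply/ffunP => u.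
  have := congr1 (fun f : fT => f (Some u)) E; rewrite !ffunE.
  move: (H1 u) (H2 u); case hu: (u \in N) => //.
  - by case: (u =P v) => [e|_ _ _]; [move: vN; rewrite -e hu | ].
  - by move=> /eqP -> /eqP ->.
apply: eq_card => f; apply/idP/imsetP.
  rewrite !inE => /andP[/andP[/andP[/suppP fs /goodP fg] /eqP fv] /eqP rf].
  have fN : f None = g None by rewrite -rf ffunE.
  exists [ffun u => if u \in N then f (Some u) else ord0].
    rewrite inE; apply/forallP => u; rewrite ffunE; case hu: (u \in N) => //.
    move: hu; rewrite inN => /andP[hu hvu].
    have := fg v u hv hu hvu; by rewrite fv eqxx /= fN.
  apply/ffunP => -[u|]; rewrite !ffunE //.
  case: (u =P v) => [->|huv]; first by rewrite fv.
  case hu: (u \in N) => //.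
  by rewrite -rf ffunE inNc hu; case: (u =P v).
case=> h; rewrite !inE => /forallP hH ->.
have EN : ext h None = g None by rewrite ffunE.
rewrite [ext h (Some v)]ffunE eqxx EN eqxx andbT.
apply/andP; split; first (apply/andP; split).
- apply/suppP => a ha; rewrite ffunE.
  have hav : a != v by apply: contraNneq ha => ->.
  have haN : a \notin N by apply: contra ha; rewrite inN => /andP[].
  rewrite (negbTE hav) (negbTE haN); apply: hs; by rewrite in_setD (negbTE ha) andbF.
- apply/goodP => a b ha hb hab; rewrite EN.
  have nb : forall u, u \in N -> ext h (Some u) != g None.
    move=> u hu; rewrite ffunE; case: (u =P v) => [e|_]; first by move: vN; rewrite -e hu.
    by move: (hH u); rewrite hu.
  case haN: (a \in N); first by rewrite (negbTE (nb a haN)).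
  case hbN: (b \in N); first by rewrite (negbTE (nb b hbN)) andbF.
  have hav : a != v by apply: contraFneq hbN => e; rewrite inN hb -e hab.
  have hbv : b != v by apply: contraFneq haN => e; rewrite inN ha -e asym hab.
  rewrite !ffunE (negbTE hav) (negbTE hbv) haN hbN.
  by apply: hg => //; rewrite in_setD inNc negb_or ?hav ?haN ?hbv ?hbN.
- apply/eqP/ffunP => -[u|]; rewrite !ffunE //.
  case hu: (u \in Nc); first by rewrite hs // inE hu.
  by move: hu; rewrite inNc; case: (u == v); case: (u \in N).
Qed.
End S.

Unset Implicit Arguments. Set Strict Implicit.

Theorem proposition3 (T : finType) (V : {set T}) (adj : rel T)
  (adj_sym : symmetric adj) (adj_irr : irreflexive adj)
  (v : T) (hv : v \in V) (lam : nat) (hlam : 0 < lam) :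
  P_Hb V adj lam =
    (lam - 1) * P_Hb (V :\ v) adj lam
    + (lam - 1) ^ degree V adj v * P_Hb (V :\: closed_nbhd V adj v) adj lam.
Proof.
case: lam hlam => // n _.
rewrite !P_K subn1 /=.
rewrite -(cardsID [set f : {ffun option T -> 'I_n.+1} | f (Some v) != f None] (Kset adj n V)).
rewrite mulnC -(partA adj n hv) mulnC -(partB n adj_sym adj_irr hv).
congr (_ + _); apply: eq_card => f; rewrite !inE ?negbK; [done|]. by rewrite andbC.
Qed.
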